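(* Consider the setting described in the context. Suppose that: (i) for any constant $\kappa > 0$ there exist positive constants $K_f(\kappa,x)$, $\bar{K}_f(\kappa)$, $\beta_f(\kappa,x)$, $\bar{\beta}_f(\kappa)$, $K_Q(\kappa,x)$, $\bar{K}_Q(\kappa)$, $\beta_Q(\kappa,x)$, $\bar{\beta}_Q(\kappa)$ such that for each $n \in \mathbb{N}$: $\mathbb{P}\{\lVert f^*(x) - \hat{f}_n(x)\rVert > \kappa\} \leq K_f(\kappa,x)\exp(-n\beta_f(\kappa,x))$ for $P_X$-a.e. $x \in \mathcal{X}$; $\mathbb{P}\{\lVert Q^*(x) - \hat{Q}_n(x)\rVert > \kappa\} \leq K_Q(\kappa,x)\exp(-n\beta_Q(\kappa,x))$ for $P_X$-a.e. $x \in \mathcal{X}$; $\mathbb{P}\{\frac{1}{n}\sum_{i=1}^n \lVert f^*(x^i) - \hat{f}_n(x^i)\rVert^2 > \kappa^2\} \leq \bar{K}_f(\kappa)\exp(-n\bar{\beta}_f(\kappa))$; and $\mathbb{P}\{\frac{1}{n}\sum_{i=1}^n \lVert [\hat{Q}_n(x^i)]^{-1} - [Q^*(x^i)]^{-1}\rVert^2 > \kappa^2\} \leq \bar{K}_Q(\kappa)\exp(-n\bar{\beta}_Q(\kappa))$; (ii) for any constant $\kappa > 0$ there exist positive constants $\gamma_Q(\kappa)$, $\bar{\gamma}_Q(\kappa)$ such that for each $n \in \mathbb{N}$: $\mathbb{P}\{(\frac{1}{n}\sum_{i=1}^n \lVert [Q^*(x^i)]^{-1}\rVert^2)^{1/2}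 > (\mathbb{E}[\lVert [Q^*(X)]^{-1}\rVert^2])^{1/2} + \kappa\} \leq \exp(-n\gamma_Q(\kappa))$ and $\mathbb{P}\{(\frac{1}{n}\sum_{i=1}^n \lVert Q^*(x^i)\rVert^4)^{1/4} > (\mathbb{E}[\lVert Q^*(X)\rVert^4])^{1/4} + \kappa\} \leq \exp(-n\bar{\gamma}_Q(\kappa))$; (iii) for any constant $\kappa > 0$ there exist positive constants $\gamma_\varepsilon(\kappa)$, $\bar{\gamma}_\varepsilon(\kappa)$ such that for each $n \in \mathbb{N}$: $\mathbb{P}\{\frac{1}{n}\sum_{i=1}^n \lVert\varepsilon^i\rVert > \mathbb{E}[\lVert\varepsilon\rVert] + \kappa\} \leq \exp(-n\gamma_\varepsilon(\kappa))$ and $\mathbb{P}\{(\frac{1}{n}\sum_{i=1}^n \lVert\varepsilon^i\rVert^4)^{1/4} > (\mathbb{E}[\lVert\varepsilon\rVert^4])^{1/4} + \kappa\} \leq \exp(-n\bar{\gamma}_\varepsilon(\kappa))$ (all expectations appearing here being finite). Then for any constant $\kappa > 0$ and $P_X$-a.e. $x \in \mathcal{X}$ there exist positive constants $\tilde{K}(\kappa,x)$ and $\tilde{\beta}(\kappa,x)$ such that for all $n \in \mathbb{N}$, \[ \mathbb{P}\biggl\{\frac{1}{n}\sum_{i=1}^{n} \lVert\tilde{\varepsilon}^i_n(x)\rVert > \kappa\biggr\} \leq \tilde{K}(\kappa,x)\exp(-n\tilde{\beta}(\kappa,x)). \]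
   Context: Random vectors $Y \in \mathbb{R}^{d_y}$ and covariates $X \in \mathbb{R}^{d_x}$ satisfy $Y = f^*(X) + Q^*(X)\varepsilon$, where $f^*:\mathbb{R}^{d_x}\to\mathbb{R}^{d_y}$, $Q^*:\mathbb{R}^{d_x}\to\mathbb{R}^{d_y\times d_y}$, the zero-mean random error $\varepsilon \in \mathbb{R}^{d_y}$ is independent of $X$, and $Q^*(x) \succ 0$ for $P_X$-a.e. $x$ in the support $\mathcal{X}$ of $X$ ($P_X$ is the distribution of $X$). Data $\mathcal{D}_n = \{(y^i,x^i)\}_{i=1}^n$ are joint observations of $(Y,X)$, with error realizations $\varepsilon^i = [Q^*(x^i)]^{-1}(y^i - f^*(x^i))$. Regression estimates $\hat{f}_n$ of $f^*$ and $\hat{Q}_n$ of $Q^*$ are computed from $\mathcal{D}_n$, with $\hat{Q}_n(x) \succ 0$ almost surely for $P_X$-a.e. $x \in \mathcal{X}$. Define $\hat{\varepsilon}^i_n := [\hat{Q}_n(x^i)]^{-1}(y^i - \hat{f}_n(x^i))$ and, for $x \in \mathcal{X}$, $\tilde{\varepsilon}^i_n(x) := (\hat{f}_n(x) + \hat{Q}_n(x)\hat{\varepsilon}^i_n) - (f^*(x) + Q^*(x)\varepsilon^i)$. $\lVert\cdot\rVert$ is the Euclidean norm on vectors and the induced operator norm on matrices; $\mathbb{P}$ is the probability measure generating the data. *)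

(* Defs.v *)
From mathcomp Require Import all_boot all_order all_algebra.
From mathcomp Require Import all_classical all_reals all_analysis.
Import numFieldNormedType.Exports.
Import Order.TTheory GRing.Theory Num.Theory.

Set Implicit Arguments.
Unset Strict Implicit.
Unset Printing Implicit Defensive.

Local Open Scope classical_set_scope.
Local Open Scope ring_scope.

Section defs.
Variable R : realType.

Definition vnorm (n : nat) (v : 'cV[R]_n) : R :=
  Num.sqrt (\sum_(j < n) v j 0 ^+ 2).

Definition opnorm (m n : nat) (A : 'M[R]_(m, n)) : R :=
  sup [set vnorm (A *m v) | v in [set v : 'cV[R]_n | vnorm v <= 1]].

Definition posdef (n : nat) (M : 'M[R]_n) : Prop :=
  M^T = M /\ forall v : 'cV[R]_n, v != 0 -> 0 < (v^T *m M *m v) 0 0.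

Definition mborel (m n : nat) : set (set 'M[R]_(m, n)) :=
  <<s [set U : set 'M[R]_(m, n) | open U] >>.

Definition borel_map (m n p q : nat) (f : 'M[R]_(m, n) -> 'M[R]_(p, q)) : Prop :=
  forall B, mborel B -> mborel (f @^-1` B).

Context {d : measure_display} {T : measurableType d}.

Definition rand_mx (m n : nat) (Z : T -> 'M[R]_(m, n)) : Prop :=
  forall B, mborel B -> measurable (Z @^-1` B).

Variable P : probability T R.

Definition same_law (m n : nat) (Z1 Z2 : T -> 'M[R]_(m, n)) : Prop :=
  forall B, mborel B -> P (Z1 @^-1` B) = P (Z2 @^-1` B).

Definition indep2 (m n p q : nat) (Z1 : T -> 'M[R]_(m, n))
    (Z2 : T -> 'M[R]_(p, q)) : Prop :=
  forall A B, mborel A -> mborel B ->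
    P (Z1 @^-1` A `&` Z2 @^-1` B) = (P (Z1 @^-1` A) * P (Z2 @^-1` B))%E.

Definition mutual_indep (m n : nat) (Z : nat -> T -> 'M[R]_(m, n)) : Prop :=
  forall (s : seq nat) (B : nat -> set 'M[R]_(m, n)), uniq s ->
    (forall i, mborel (B i)) ->
    P (\bigcap_(i in [set i | i \in s]) (Z i @^-1` B i))
    = (\prod_(i <- s) P (Z i @^-1` B i))%E.

(** "for P_X-a.e. x, Phi x", where P_X is the law of X. *)
Definition ae_law (m n : nat) (X : T -> 'M[R]_(m, n))
    (Phi : 'M[R]_(m, n) -> Prop) : Prop :=
  P.-negligible (X @^-1` [set x | ~ Phi x]).

End defs.

Section regression.
Variables (R : realType) (d : measure_display) (T : measurableType d).
Variables (dx dy : nat).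
Variables (fs : 'cV[R]_dx -> 'cV[R]_dy) (Qs : 'cV[R]_dx -> 'M[R]_dy).
Variables (xs : nat -> T -> 'cV[R]_dx) (ys : nat -> T -> 'cV[R]_dy).
Variables (fhat : nat -> T -> 'cV[R]_dx -> 'cV[R]_dy)
          (Qhat : nat -> T -> 'cV[R]_dx -> 'M[R]_dy).

Definition eps_data (i : nat) (w : T) : 'cV[R]_dy :=
  invmx (Qs (xs i w)) *m (ys i w - fs (xs i w)).

Definition eps_hat (n i : nat) (w : T) : 'cV[R]_dy :=
  invmx (Qhat n w (xs i w)) *m (ys i w - fhat n w (xs i w)).

Definition eps_tilde (n i : nat) (w : T) (x : 'cV[R]_dx) : 'cV[R]_dy :=
  (fhat n w x + Qhat n w x *m eps_hat n i w) - (fs x + Qs x *m eps_data i w).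

End regression.

(* Main.v *)
Require Import Defs.
From mathcomp Require Import all_boot all_order all_algebra.
From mathcomp Require Import all_classical all_reals all_analysis.
From mathcomp Require Import ring lra.
From mathcomp Require Import measurable_realfun measurable_fun_approximation.
Import numFieldNormedType.Exports.
Import Order.TTheory GRing.Theory Num.Theory.
Local Open Scope classical_set_scope.
Local Open Scope ring_scope.
Set Implicit Arguments.
Unset Strict Implicit.
Unset Printing Implicit Defensive.
Section alg.
Variable R : realType.

Lemma CS (n : nat) (u v : 'I_n -> R) :
  (\sum_i u i * v i) ^+ 2 <= (\sum_i u i ^+ 2) * (\sum_i v i ^+ 2).
Proof.
set U := \sum_i u i ^+ 2; set V := \sum_i v i ^+ 2; set S := \sum_i u i * v i.
have U0 : 0 <= U by apply: sumr_ge0 => i _; exact: sqr_ge0.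
have [Ue|Upos] := eqVneq U 0.
  have u0 : forall i, u i = 0.
    move=> i; apply/eqP; rewrite -sqrf_eq0; apply/eqP.
    by apply: (@psumr_eq0P _ _ predT (fun i => u i ^+ 2)) => // j _; exact: sqr_ge0.
  rewrite Ue.
  rewrite /S (eq_bigr (fun=> 0)) ?big1 // => [|i _]; first by rewrite expr0n mul0r.
  by rewrite u0 mul0r.
have Ugt : 0 < U by rewrite lt_def Upos U0.
have H : 0 <= \sum_i (U * v i - S * u i) ^+ 2 by apply: sumr_ge0 => i _; exact: sqr_ge0.
have E : \sum_i (U * v i - S * u i) ^+ 2 = U * (U * V - S ^+ 2).
  have -> : \sum_i (U * v i - S * u i) ^+ 2 =
     \sum_i (U ^+ 2 * v i ^+ 2 - (2 * U * S) * (u i * v i) + S ^+ 2 * u i ^+ 2).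
    by apply: eq_bigr => i _; ring.
  rewrite big_split /= big_split /= sumrN -!mulr_sumr -/U -/V -/S; ring.
rewrite E in H.
have : 0 <= U * V - S ^+ 2 by rewrite -(pmulr_rge0 _ Ugt).
lra.
Qed.


Definition frob (m n : nat) (A : 'M[R]_(m, n)) : R :=
  Num.sqrt (\sum_i \sum_j A i j ^+ 2).

Lemma vnorm_ge0 n (v : 'cV[R]_n) : 0 <= vnorm v.
Proof. exact: sqrtr_ge0. Qed.

Lemma frob_ge0 m n (A : 'M[R]_(m, n)) : 0 <= frob A.
Proof. exact: sqrtr_ge0. Qed.

Lemma vnorm_sqr n (v : 'cV[R]_n) : vnorm v ^+ 2 = \sum_j v j 0 ^+ 2.
Proof. by rewrite sqr_sqrtr // sumr_ge0 // => i _; exact: sqr_ge0. Qed.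

Lemma frob_sqr m n (A : 'M[R]_(m, n)) : frob A ^+ 2 = \sum_i \sum_j A i j ^+ 2.
Proof.
by rewrite sqr_sqrtr // sumr_ge0 // => i _; rewrite sumr_ge0 // => j _; exact: sqr_ge0.
Qed.

Lemma le_sqr_nneg (a b : R) : 0 <= b -> a ^+ 2 <= b ^+ 2 -> a <= b.
Proof.
move=> b0 h; have [a0|a0] := leP a 0; first exact: le_trans a0 b0.
by rewrite -ler_sqr // ?qualifE /= ?ltW.
Qed.

Lemma CS' (n : nat) (u v : 'I_n -> R) :
  \sum_i u i * v i <= Num.sqrt (\sum_i u i ^+ 2) * Num.sqrt (\sum_i v i ^+ 2).
Proof.
apply: le_sqr_nneg; first by rewrite mulr_ge0 // sqrtr_ge0.
rewrite exprMn !sqr_sqrtr ?CS // sumr_ge0 // => i _; exact: sqr_ge0.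
Qed.

Lemma vnormD n (u v : 'cV[R]_n) : vnorm (u + v) <= vnorm u + vnorm v.
Proof.
apply: le_sqr_nneg; first by rewrite addr_ge0 // vnorm_ge0.
rewrite vnorm_sqr.
have -> : \sum_j (u + v) j 0 ^+ 2 =
   \sum_j u j 0 ^+ 2 + \sum_j v j 0 ^+ 2 + 2 * \sum_j u j 0 * v j 0.
  rewrite mulr_sumr -!big_split /=; apply: eq_bigr => j _; rewrite mxE; ring.
rewrite sqrrD -!vnorm_sqr.
have := CS' (fun j => u j 0) (fun j => v j 0); rewrite -/(vnorm u) -/(vnorm v).
lra.
Qed.

Lemma vnormN n (v : 'cV[R]_n) : vnorm (- v) = vnorm v.
Proof. by rewrite /vnorm; congr Num.sqrt; apply: eq_bigr => j _; rewrite mxE sqrrN. Qed.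

Lemma frobN m n (A : 'M[R]_(m, n)) : frob (- A) = frob A.
Proof.
by rewrite /frob; congr Num.sqrt; apply: eq_bigr => i _; apply: eq_bigr => j _;
  rewrite mxE sqrrN.
Qed.

Lemma vnormB n (u v : 'cV[R]_n) : vnorm (u - v) = vnorm (v - u).
Proof. by rewrite -vnormN opprB. Qed.

Lemma frobB m n (A B : 'M[R]_(m, n)) : frob (A - B) = frob (B - A).
Proof. by rewrite -frobN opprB. Qed.

Lemma vnorm_mul m n (A : 'M[R]_(m, n)) (v : 'cV[R]_n) :
  vnorm (A *m v) <= frob A * vnorm v.
Proof.
apply: le_sqr_nneg; first by rewrite mulr_ge0 ?frob_ge0 ?vnorm_ge0.
rewrite exprMn vnorm_sqr frob_sqr vnorm_sqr mulr_suml; apply: ler_sum => i _.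
rewrite mxE; exact: CS.
Qed.

Lemma vnorm_le_frob n (v : 'cV[R]_n) (A : 'M[R]_(n, n)) : True.
Proof. by []. Qed.

Lemma opnorm_ub m n (A : 'M[R]_(m, n)) (v : 'cV[R]_n) :
  vnorm v <= 1 -> vnorm (A *m v) <= opnorm A.
Proof.
move=> v1; apply: sup_upper_bound; last by exists v.
split; first by exists (vnorm (A *m v)), v.
exists (frob A) => _ [w w1 <-].
apply: le_trans (vnorm_mul A w) _.
by rewrite -[X in _ <= X]mulr1 ler_wpM2l ?frob_ge0.
Qed.

Lemma delta_col m n (A : 'M[R]_(m, n)) (j : 'I_n) (i : 'I_m) :
  (A *m delta_mx j (0 : 'I_1)) i 0 = A i j.
Proof.
rewrite mxE (bigD1 j) //= mxE !eqxx mulr1 big1 ?addr0 // => k kj.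
by rewrite mxE (negbTE kj) mulr0.
Qed.

Lemma vnorm_delta n (j : 'I_n) : vnorm (delta_mx j (0 : 'I_1) : 'cV[R]_n) = 1.
Proof.
rewrite /vnorm (bigD1 j) //= mxE !eqxx big1 ?addr0 ?expr1n ?sqrtr1 // => k kj.
by rewrite mxE (negbTE kj) /= expr0n.
Qed.

Lemma frob_opnorm m n (A : 'M[R]_(m, n)) :
  frob A <= Num.sqrt n%:R * opnorm A.
Proof.
case: n A => [|n] A.
  by rewrite /frob big1 ?sqrtr0 ?mul0r // => i _; rewrite big_ord0.
have op0 : 0 <= opnorm A.
  apply: le_trans (opnorm_ub A (v := delta_mx ord0 0) _); first exact: vnorm_ge0.
  by rewrite vnorm_delta.
apply: le_sqr_nneg; first by rewrite mulr_ge0 ?sqrtr_ge0.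
rewrite frob_sqr exprMn sqr_sqrtr // exchange_big /=.
rewrite -[in X in _ <= X * _](card_ord n.+1) -sum1_card natr_sum mulr_suml.
apply: ler_sum => j _; rewrite mul1r.
have := opnorm_ub A (v := delta_mx j 0); rewrite vnorm_delta lexx => /(_ isT) h.
have : vnorm (A *m delta_mx j 0) ^+ 2 <= opnorm A ^+ 2.
  by rewrite ler_sqr // qualifE /= ?vnorm_ge0.
rewrite vnorm_sqr; congr (_ <= _); apply: eq_bigr => i _; by rewrite delta_col.
Qed.

Lemma ac8 (V : zmodType) (t1 t2 t3 t4 t5 t6 t7 t8 : V) :
  t1 + t3 + (t5 + t7) + (t2 + t4 + (t6 + t8)) - t1 =
  t2 + t3 + t4 + t5 + t6 + t7 + t8.
Proof.
rewrite addrAC (addrAC (t1 + t3)) (addrAC t1) subrr add0r -!addrA.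
rewrite (addrCA t7 t2) (addrCA t5 t2) (addrCA t3 t2); congr (_ + _); congr (_ + _).
by rewrite (addrCA t7 t4) (addrCA t5 t4) (addrCA t7 t6).
Qed.

Lemma decomp n (Qs Dl B D : 'M[R]_n) (r u : 'cV[R]_n) :
  (Qs + Dl) *m ((B + D) *m (r + u)) - Qs *m (B *m r) =
  Qs *m (B *m u) + Qs *m (D *m r) + Qs *m (D *m u) + Dl *m (B *m r)
  + Dl *m (B *m u) + Dl *m (D *m r) + Dl *m (D *m u).
Proof. by rewrite !mulmxDr !mulmxDl !mulmxDr ac8. Qed.

End alg.

Lemma amgm (R : realType) (x y : R) : x * y <= (x ^+ 2 + y ^+ 2) / 2.
Proof. have := sqr_ge0 (x - y). nra. Qed.

Lemma mono_l (R : realType) (a a' x : R) : 0 <= x -> a <= a' -> a * x <= a' * x.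
Proof. by move=> x0 h; rewrite ler_wpM2r. Qed.

Lemma real_bound (R : realType) (q s δ Dn b e ρ μ : R) :
  0 <= q -> 0 <= s -> 0 < δ -> δ <= 1 -> 0 <= Dn -> Dn <= s * δ ->
  0 <= b -> 0 <= e -> 0 <= ρ -> 0 <= μ ->
  q * (b * μ) + q * (e * ρ) + q * (e * μ) + Dn * (b * ρ) + Dn * (b * μ)
  + Dn * (e * ρ) + Dn * (e * μ)
  <= (q + s) * (δ * b ^+ 2 + δ * ρ ^+ 2 + μ ^+ 2 / δ + e ^+ 2 / δ).
Proof.
move=> q0 s0 d0 d1 D0 Ds b0 e0 r0 m0.
set m := μ / δ; set k := e / δ.
have hm : μ = δ * m by rewrite /m mulrC divfK // gt_eqF.
have hk : e = δ * k by rewrite /k mulrC divfK // gt_eqF.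
have m0' : 0 <= m by rewrite divr_ge0 // ltW.
have k0' : 0 <= k by rewrite divr_ge0 // ltW.
have -> : μ ^+ 2 / δ = δ * m ^+ 2 by rewrite hm; field; rewrite gt_eqF.
have -> : e ^+ 2 / δ = δ * k ^+ 2 by rewrite hk; field; rewrite gt_eqF.
rewrite hm hk.
set S2 := b ^+ 2 + ρ ^+ 2 + m ^+ 2 + k ^+ 2.
have h1 := amgm b m; have h2 := amgm k ρ; have h3 := amgm k m; have h4 := amgm b ρ.
have A1 : b * m + k * ρ + k * m <= S2.
  have := sqr_ge0 b; have := sqr_ge0 ρ; have := sqr_ge0 m; have := sqr_ge0 k. rewrite /S2; lra.
have A2 : b * ρ + b * m + k * ρ + k * m <= S2 by rewrite /S2; lra.
have P1 : 0 <= b * m by rewrite mulr_ge0.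
have P2 : 0 <= k * ρ by rewrite mulr_ge0.
have P3 : 0 <= k * m by rewrite mulr_ge0.
have P4 : 0 <= b * ρ by rewrite mulr_ge0.
have dd : δ * δ <= δ by rewrite -{3}(mul1r δ) mono_l // ltW.
have Dd : Dn * δ <= s * δ by apply: le_trans Ds; rewrite -{2}(mulr1 Dn) ler_wpM2l.
have Ddd : Dn * (δ * δ) <= s * δ by apply: le_trans Dd; rewrite ler_wpM2l.
have E : q * (b * (δ * m)) + q * (δ * k * ρ) + q * (δ * k * (δ * m)) +
   Dn * (b * ρ) + Dn * (b * (δ * m)) + Dn * (δ * k * ρ) + Dn * (δ * k * (δ * m))
  = q * δ * (b * m) + q * δ * (k * ρ) + q * (δ * δ) * (k * m) + Dn * (b * ρ)
    + Dn * δ * (b * m) + Dn * δ * (k * ρ) + Dn * (δ * δ) * (k * m) by ring.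
rewrite E.
have F1 : q * (δ * δ) * (k * m) <= q * δ * (k * m) by rewrite mono_l // ler_wpM2l.
have F2 : Dn * (b * ρ) <= s * δ * (b * ρ) by rewrite mono_l.
have F3 : Dn * δ * (b * m) <= s * δ * (b * m) by rewrite mono_l.
have F4 : Dn * δ * (k * ρ) <= s * δ * (k * ρ) by rewrite mono_l.
have F5 : Dn * (δ * δ) * (k * m) <= s * δ * (k * m) by rewrite mono_l.
have G1 : q * δ * (b * m + k * ρ + k * m) <= q * δ * S2 by rewrite ler_wpM2l // mulr_ge0 // ltW.
have G2 : s * δ * (b * ρ + b * m + k * ρ + k * m) <= s * δ * S2 by rewrite ler_wpM2l // mulr_ge0 // ltW.
have -> : (q + s) * (δ * b ^+ 2 + δ * ρ ^+ 2 + δ * m ^+ 2 + δ * k ^+ 2) = q * δ * S2 + s * δ * S2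
  by rewrite /S2; ring.
move: G1 G2; rewrite !mulrDr; lra.
Qed.

Lemma vnorm_mul2 (R : realType) n (M N : 'M[R]_n) (z : 'cV[R]_n) :
  vnorm (M *m (N *m z)) <= frob M * (frob N * vnorm z).
Proof.
apply: le_trans (vnorm_mul _ _) _; rewrite ler_wpM2l ?frob_ge0 //; exact: vnorm_mul.
Qed.

Lemma pointwise (R : realType) n (fh fsx : 'cV[R]_n) (Qh Qsx A B : 'M[R]_n)
    (y fsi fhi : 'cV[R]_n) (s δ : R) :
  0 < δ -> δ <= 1 -> 0 <= s -> frob (Qh - Qsx) <= s * δ ->
  vnorm ((fh + Qh *m (A *m (y - fhi))) - (fsx + Qsx *m (B *m (y - fsi))))
  <= vnorm (fh - fsx) + (frob Qsx + s) * (δ * frob B ^+ 2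
     + δ * vnorm (y - fsi) ^+ 2 + vnorm (fsi - fhi) ^+ 2 / δ + frob (A - B) ^+ 2 / δ).
Proof.
move=> d0 d1 s0 hD.
have -> : (fh + Qh *m (A *m (y - fhi))) - (fsx + Qsx *m (B *m (y - fsi))) =
   (fh - fsx) + ((Qsx + (Qh - Qsx)) *m ((B + (A - B)) *m ((y - fsi) + (fsi - fhi)))
                  - Qsx *m (B *m (y - fsi))).
  rewrite [Qsx + _]addrC subrK [B + _]addrC subrK.
  have -> : y - fsi + (fsi - fhi) = y - fhi by rewrite [in LHS]addrA subrK.
  by rewrite opprD addrACA.
rewrite decomp.
set Dl := Qh - Qsx; set D := A - B; set r := y - fsi; set u := fsi - fhi.
apply: le_trans (vnormD _ _) _; rewrite lerD2l.
apply: le_trans (_ : _ <= frob Qsx * (frob B * vnorm u) + frob Qsx * (frob D * vnorm r)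
  + frob Qsx * (frob D * vnorm u) + frob Dl * (frob B * vnorm r)
  + frob Dl * (frob B * vnorm u) + frob Dl * (frob D * vnorm r)
  + frob Dl * (frob D * vnorm u)) _.
  do 6 (apply: le_trans (vnormD _ _) _; apply: lerD; last exact: vnorm_mul2).
  exact: vnorm_mul2.
by apply: real_bound => //; rewrite ?frob_ge0 ?vnorm_ge0.
Qed.

Section meas.
Variable R : realType.

Lemma mborel_open m n (U : set 'M[R]_(m, n)) : open U -> mborel U.
Proof. by move=> oU; apply: sub_sigma_algebra. Qed.

Lemma mborelC m n (U : set 'M[R]_(m, n)) : mborel U -> mborel (~` U).
Proof. by move=> h; rewrite -setTD; apply: sigma_algebraCD. Qed.

Lemma borel_cont m n p q (f : 'M[R]_(m, n) -> 'M[R]_(p, q)) :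
  continuous f -> forall B, mborel B -> mborel (f @^-1` B).
Proof.
move=> /continuousP cf.
have : <<s [set U : set 'M[R]_(p, q) | open U] >> `<=` [set B | mborel (f @^-1` B)].
  apply: smallest_sub.
    split.
    - by rewrite /mborel /= preimage_set0; exact: sigma_algebra0.
    - move=> A hA; rewrite /= setTD preimage_setC -setTD; exact: sigma_algebraCD.
    - by move=> F hF; rewrite /= preimage_bigcup; exact: sigma_algebra_bigcup.
  by move=> U oU /=; apply: mborel_open; exact: cf.
by move=> h B hB; exact: h.
Qed.

Lemma usubmx_cont a b : continuous (fun z : 'cV[R]_(a + b) => usubmx z).
Proof.
move=> z A /nbhs_ballP [e e0 eA]; apply/nbhs_ballP; exists e => // z' [_ h].
by apply: eA; split => // i j; rewrite !mxE; exact: h.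
Qed.

Context {d : measure_display} {S : measurableType d}.

Definition mentries p q (Z : S -> 'M[R]_(p, q)) :=
  forall i j, measurable_fun setT (fun w => Z w i j).

Lemma borel_entries p q (Z : S -> 'M[R]_(p, q)) :
  (forall B, mborel B -> measurable (Z @^-1` B)) -> mentries Z.
Proof.
move=> hZ i j; apply: (measurability _ (measurable_realfun.RGenOInfty.measurableE R)).
move=> _ [_ [x ->] <-]; rewrite setTI.
have -> : (fun w => Z w i j) @^-1` `]x, +oo[%classic =
   Z @^-1` ((fun M : 'M[R]_(p, q) => M i j) @^-1` `]x, +oo[%classic) by [].
apply: hZ; apply: mborel_open.
by move: (@coord_continuous R p q i j) => /continuousP; apply; exact: interval_open.
Qed.

End meas.

Section meas2.
Variable R : realType.
Context {d : measure_display} {S : measurableType d}.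
Implicit Types (p q : nat).

Lemma mentries_cst p q (M : 'M[R]_(p, q)) : mentries (fun _ : S => M).
Proof. by move=> i j; exact: measurable_cst. Qed.

Lemma mentriesD p q (Y Z : S -> 'M[R]_(p, q)) :
  mentries Y -> mentries Z -> mentries (fun w => Y w + Z w).
Proof.
move=> hY hZ i j; rewrite (_ : (fun w => _) = (fun w => Y w i j + Z w i j)).
  exact: measurable_funD.
by apply/funext => w; rewrite mxE.
Qed.

Lemma mentriesN p q (Z : S -> 'M[R]_(p, q)) :
  mentries Z -> mentries (fun w => - Z w).
Proof.
move=> hZ i j; rewrite (_ : (fun w => _) = (fun w => - Z w i j)).
  exact: measurable_funN.
by apply/funext => w; rewrite mxE.
Qed.

Lemma mentriesB p q (Y Z : S -> 'M[R]_(p, q)) :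
  mentries Y -> mentries Z -> mentries (fun w => Y w - Z w).
Proof. by move=> hY hZ; apply: mentriesD => //; exact: mentriesN. Qed.

Lemma mentriesM p q r (Y : S -> 'M[R]_(p, q)) (Z : S -> 'M[R]_(q, r)) :
  mentries Y -> mentries Z -> mentries (fun w => Y w *m Z w).
Proof.
move=> hY hZ i j; rewrite (_ : (fun w => _) = (fun w => \sum_k Y w i k * Z w k j)).
  by apply: measurable_sum => k; exact: measurable_funM.
by apply/funext => w; rewrite mxE.
Qed.

Lemma measurable_det p (Z : S -> 'M[R]_p) :
  mentries Z -> measurable_fun setT (fun w => \det (Z w)).
Proof.
move=> hZ; apply: measurable_sum => s.
apply: measurable_funM; first exact: measurable_cst.
by apply: measurable_prod => i _; exact: hZ.
Qed.

Lemma mentries_adj p (Z : S -> 'M[R]_p) :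
  mentries Z -> mentries (fun w => \adj (Z w)).
Proof.
case: p Z => [|p] Z hZ i j; first by case: i.
rewrite (_ : (fun w => _) = (fun w => (-1) ^+ (j + i) * \det (row' j (col' i (Z w))))).
  apply: measurable_funM; first exact: measurable_cst.
  apply: measurable_det => k l.
  rewrite (_ : (fun w => _) = (fun w => Z w (lift j k) (lift i l))); first exact: hZ.
  by apply/funext => w; rewrite !mxE.
by apply/funext => w; rewrite mxE /cofactor.
Qed.

Lemma measurable_inv : measurable_fun setT (@GRing.inv R).
Proof.
have -> : [set: R] = [set x | x != 0] `|` [set 0].
  by apply/seteqP; split => x //= _; case: (eqVneq x 0); [right|left].
apply/measurable_funU => //.
  rewrite (_ : [set x | x != 0] = ~` [set 0]); first exact: measurableC.
  by apply/seteqP; split => x /=; move/eqP.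
split.
  apply: open_continuous_measurable_fun; first exact: open_neq.
  by move=> x; rewrite inE => x0; exact: inv_continuous.
apply: (eq_measurable_fun (cst (0 : R))); last exact: measurable_cst.
by move=> x; rewrite inE /= => ->; rewrite invr0.
Qed.

Lemma mentries_invmx p (Z : S -> 'M[R]_p) :
  mentries Z -> mentries (fun w => invmx (Z w)).
Proof.
move=> hZ i j.
rewrite (_ : (fun w => _) = (fun w => if \det (Z w) == 0 then Z w i j
                  else (\det (Z w))^-1 * \adj (Z w) i j)).
  apply: measurable_fun_ifT.
  - apply: measurable_fun_eqr; [exact: measurable_det|exact: measurable_cst].
  - exact: hZ.
  - apply: measurable_funM; last exact: mentries_adj.
    exact: measurableT_comp measurable_inv (measurable_det hZ).
apply/funext => w; rewrite /invmx unitmxE unitfE.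
by case: eqP => _ //=; rewrite mxE.
Qed.

Lemma measurable_sqrt_fun (f : S -> R) :
  measurable_fun setT f -> measurable_fun setT (fun w => Num.sqrt (f w)).
Proof.
move=> mf; apply: measurableT_comp mf.
exact: continuous_measurable_fun (@sqrt_continuous R).
Qed.

Lemma measurable_vnorm p (Z : S -> 'cV[R]_p) :
  mentries Z -> measurable_fun setT (fun w => vnorm (Z w)).
Proof.
move=> hZ; apply: measurable_sqrt_fun; apply: measurable_sum => j.
exact: measurable_funX.
Qed.

Lemma measurable_frob p q (Z : S -> 'M[R]_(p, q)) :
  mentries Z -> measurable_fun setT (fun w => frob (Z w)).
Proof.
move=> hZ; apply: measurable_sqrt_fun; apply: measurable_sum => i.
apply: measurable_sum => j; exact: measurable_funX.
Qed.

Lemma measurable_lt_set (f : S -> R) (c : R) :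
  measurable_fun setT f -> measurable [set w | c < f w].
Proof.
move=> mf; have := mf measurableT `]c, +oo[%classic (measurable_itv _).
by rewrite setTI; congr measurable; apply/seteqP; split => w /=; rewrite in_itv /= andbT.
Qed.

End meas2.

Section borel.
Variable R : realType.
Context {d : measure_display} {S : measurableType d}.

Definition box p q (c : 'M[rat]_(p, q)) (r : rat) : set 'M[R]_(p, q) :=
  [set N | forall i j, N i j \in `](ratr (c i j) - ratr r), (ratr (c i j) + ratr r)[].

Lemma box_meas p q (Z : S -> 'M[R]_(p, q)) c r :
  mentries Z -> measurable (Z @^-1` box c r).
Proof.
move=> hZ.
have -> : Z @^-1` box c r = ~` \bigcup_(k : 'I_p * 'I_q)
   ~` [set w | Z w k.1 k.2 \in `](ratr (c k.1 k.2) - ratr r), (ratr (c k.1 k.2) + ratr r)[].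
  apply/seteqP; split => w /=.
    by move=> h [k _ /=]; apply; exact: h.
  move=> h i j; apply: contrapT => hn; apply: h; exists (i, j) => //.
apply: measurableC; apply: countable_bigcupT_measurable; first exact: countableP.
move=> k; apply: measurableC.
have := hZ k.1 k.2 measurableT _ (measurable_itv `](ratr (c k.1 k.2) - ratr r), (ratr (c k.1 k.2) + ratr r)[).
by rewrite setTI.
Qed.

Lemma open_meas p q (Z : S -> 'M[R]_(p, q)) (U : set 'M[R]_(p, q)) :
  mentries Z -> open U -> measurable (Z @^-1` U).
Proof.
move=> hZ oU.
pose F (k : 'M[rat]_(p, q) * rat) : set S :=
  [set w | box k.1 k.2 `<=` U /\ box k.1 k.2 (Z w)].
have -> : Z @^-1` U = \bigcup_k F k.
  apply/seteqP; split => w /=; last by move=> [k _ [kU kw]]; exact: kU.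
  move=> UZ.
  have : nbhs (Z w) U.
    by move: oU; rewrite openE => oU; exact: oU _ UZ.
  move=> hn; have H := iffLR (@nbhs_ballP R _ (Z w) U) hn. case: H => e e0 eU.
  have [r /andP[r0 re]] : exists r : rat, ((0 : R) < ratr r) && (ratr r < e / 2).
    have /rat_in_itvoo [r] : (0 : R) < e / 2 by rewrite divr_gt0.
    by rewrite in_itv /=; exists r.
  have [cf hc] : exists cf : 'I_p * 'I_q -> rat, forall k,
      ratr (cf k) \in `](Z w k.1 k.2 - ratr r), (Z w k.1 k.2 + ratr r)[.
    have hr : forall k : 'I_p * 'I_q, Z w k.1 k.2 - ratr r < Z w k.1 k.2 + ratr r.
      by move=> k; lra.
    have [cf hc] := @choice _ _ (fun k q0 => (ratr q0 : R) \in `](Z w k.1 k.2 - ratr r), (Z w k.1 k.2 + ratr r)[)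
      (fun k => rat_in_itvoo (hr k)).
    by exists cf.
  exists (\matrix_(i, j) cf (i, j), r) => //; split => /=.
    move=> N hN; apply: eU; split => // i j.
    move: (hN i j) (hc (i, j)); rewrite !mxE !in_itv /= => /andP[h1 h2] /andP[h3 h4].
    rewrite /ball /=; rewrite ltr_norml; apply/andP; split; lra.
  move=> i j; move: (hc (i, j)); rewrite !mxE !in_itv /= => /andP[h1 h2].
  apply/andP; split; lra.
apply: countable_bigcupT_measurable; first exact: countableP.
move=> [c r]; rewrite /F /=.
case: (pselect (box c r `<=` U)) => hb.
  rewrite (_ : [set w | _ /\ _] = Z @^-1` box c r); first exact: box_meas.
  by apply/seteqP; split => w /=; [case|].
rewrite (_ : [set w | _ /\ _] = set0) //.
by apply/seteqP; split => w //= [].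
Qed.

Lemma entries_borel p q (Z : S -> 'M[R]_(p, q)) :
  mentries Z -> forall B, mborel B -> measurable (Z @^-1` B).
Proof.
move=> hZ.
have : <<s [set U : set 'M[R]_(p, q) | open U] >> `<=` [set B | measurable (Z @^-1` B)].
  apply: smallest_sub.
    split.
    - by rewrite /= preimage_set0.
    - by move=> A hA; rewrite /= setTD preimage_setC; exact: measurableC.
    - by move=> F hF; rewrite /= preimage_bigcup; exact: bigcupT_measurable.
  by move=> U oU /=; exact: open_meas.
by move=> h B hB; exact: h.
Qed.

Lemma opnorm_le_ub p q (A : 'M[R]_(p, q)) c :
  (forall v, vnorm v <= 1 -> vnorm (A *m v) <= c) -> opnorm A <= c.
Proof.
move=> h; apply: ge_sup.
  exists (vnorm (A *m 0)), 0 => //=.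
  by rewrite /vnorm big1 ?sqrtr0 ?ler01 // => j _; rewrite mxE expr0n.
by move=> _ [v v1 <-]; exact: h.
Qed.

Lemma opnorm_lip p q (A B : 'M[R]_(p, q)) : opnorm A <= opnorm B + frob (A - B).
Proof.
apply: opnorm_le_ub => v v1.
have -> : A *m v = B *m v + (A - B) *m v by rewrite mulmxBl addrC subrK.
apply: le_trans (vnormD _ _) _; apply: lerD; first exact: opnorm_ub.
apply: le_trans (vnorm_mul _ _) _.
by rewrite -[X in _ <= X]mulr1 ler_wpM2l ?frob_ge0.
Qed.

Lemma frob_small p q (N : 'M[R]_(p, q)) e :
  (forall i j, `|N i j| < e) -> frob N ^+ 2 <= (p * q)%:R * e ^+ 2.
Proof.
move=> h; rewrite frob_sqr natrM -mulrA.
have -> : (p%:R : R) = \sum_(i < p) 1 by rewrite sumr_const card_ord.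
have -> : (q%:R : R) = \sum_(i < q) 1 by rewrite sumr_const card_ord.
rewrite mulr_suml; apply: ler_sum => i _; rewrite mul1r mulr_suml.
apply: ler_sum => j _; rewrite mul1r -real_normK ?num_real //.
by rewrite ler_sqr ?nnegrE ?normr_ge0 // ltW // (le_lt_trans (normr_ge0 _) (h i j)).
Qed.

Lemma opnorm_cont p q : continuous (@opnorm R p q).
Proof.
move=> A V /nbhs_ballP [e e0 eV]; apply/nbhs_ballP.
set k := (p * q).+1%:R : R.
have k0 : 0 < k by rewrite ltr0n.
exists (e / k); first by rewrite /= divr_gt0.
move=> B [_ hB]; apply: eV.
have hN : forall i j, `|(A - B) i j| < e / k.
  by move=> i j; rewrite !mxE; have := hB i j.
have fr := frob_small hN.
have hf : frob (A - B) < e.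
  set t := e / k.
  have t0 : 0 < t by rewrite /t divr_gt0.
  have ek : e = t * k by rewrite /t divfK // gt_eqF.
  have km : k = (p * q)%:R + 1 by rewrite /k -natr1.
  have m0 : (0 : R) <= (p * q)%:R by [].
  have lt : (p * q)%:R * t ^+ 2 < e ^+ 2.
    rewrite ek km; have := mulr_gt0 t0 t0; nra.
  have fe : frob (A - B) ^+ 2 < e ^+ 2 by apply: le_lt_trans lt.
  apply: contraLR fe; rewrite -!leNgt => h.
  by rewrite ler_sqr ?nnegrE ?frob_ge0 // ltW.
have l1 := opnorm_lip A B; have l2 := opnorm_lip B A; rewrite frobB in l2.
rewrite /ball /= ltr_norml; apply/andP; split; lra.
Qed.

Lemma measurable_opnorm p q (Z : S -> 'M[R]_(p, q)) :
  (forall B, mborel B -> measurable (Z @^-1` B)) ->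
  measurable_fun setT (fun w => opnorm (Z w)).
Proof.
move=> hZ; apply: (measurability _ (measurable_realfun.RGenOInfty.measurableE R)).
move=> _ [_ [x ->] <-]; rewrite setTI.
have -> : (fun w => opnorm (Z w)) @^-1` `]x, +oo[%classic =
   Z @^-1` ((@opnorm R p q) @^-1` `]x, +oo[%classic) by [].
apply: hZ; apply: mborel_open.
by move: (@opnorm_cont p q) => /continuousP; apply; exact: interval_open.
Qed.

End borel.

Section det.
Variable R : realType.

Lemma pow4K (y : R) : 0 <= y -> (y `^ 4^-1) ^+ 4 = y.
Proof.
by move=> y0; rewrite -powR_mulrn ?powR_ge0 // -powRrM mulVf ?powRr1 // pnatr_eq0.
Qed.

Lemma pow4_le (y c : R) : 0 <= y -> y `^ 4^-1 <= c -> y <= c ^+ 4.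
Proof.
move=> y0 h; rewrite -(pow4K y0).
rewrite ler_pXn2r // ?nnegrE ?powR_ge0 //; exact: le_trans (powR_ge0 _ _) h.
Qed.

Lemma sqrt_le (y c : R) : 0 <= y -> Num.sqrt y <= c -> y <= c ^+ 2.
Proof.
move=> y0 h; rewrite -(sqr_sqrtr y0).
rewrite ler_pXn2r // ?nnegrE ?sqrtr_ge0 //; exact: le_trans (sqrtr_ge0 _) h.
Qed.

Lemma mean_ge0 n (f : 'I_n -> R) : (forall i, 0 <= f i) -> 0 <= n%:R^-1 * \sum_i f i.
Proof. by move=> h; rewrite mulr_ge0 ?invr_ge0 // sumr_ge0. Qed.

Lemma mean_le n (f g : 'I_n -> R) : (forall i, f i <= g i) ->
  n%:R^-1 * \sum_i f i <= n%:R^-1 * \sum_i g i.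
Proof. by move=> h; rewrite ler_wpM2l ?invr_ge0 // ler_sum. Qed.

Lemma mean_bound n (t b ρ μ e : 'I_n -> R) (α c δ s MB Mr : R) :
  (0 < n)%N -> 0 <= c -> 0 < δ -> α <= δ ->
  (forall i, t i <= α + c * (δ * b i ^+ 2 + δ * ρ i ^+ 2 + μ i ^+ 2 / δ + e i ^+ 2 / δ)) ->
  n%:R^-1 * \sum_i b i ^+ 2 <= MB ->
  n%:R^-1 * \sum_i ρ i ^+ 2 <= Mr ->
  n%:R^-1 * \sum_i μ i ^+ 2 <= δ ^+ 2 ->
  n%:R^-1 * \sum_i e i ^+ 2 <= (s * δ) ^+ 2 ->
  n%:R^-1 * \sum_i t i <= δ * (1 + c * (MB + Mr + 1 + s ^+ 2)).
Proof.
move=> n0 c0 d0 ad ht hb hr hm he.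
apply: le_trans (mean_le ht) _.
have nn : (n%:R : R) != 0 by rewrite pnatr_eq0 -lt0n.
have E : n%:R^-1 * \sum_i (α + c * (δ * b i ^+ 2 + δ * ρ i ^+ 2 + μ i ^+ 2 / δ + e i ^+ 2 / δ))
  = α + c * (δ * (n%:R^-1 * \sum_i b i ^+ 2) + δ * (n%:R^-1 * \sum_i ρ i ^+ 2)
             + (n%:R^-1 * \sum_i μ i ^+ 2) / δ + (n%:R^-1 * \sum_i e i ^+ 2) / δ).
  rewrite big_split /= sumr_const card_ord -mulr_sumr !big_split /=.
  rewrite -!mulr_sumr -!mulr_suml -[α *+ n]mulr_natr.
  have dn : δ != 0 by rewrite gt_eqF.
  by field; rewrite dn nn.
rewrite E.
have h1 : δ * (n%:R^-1 * \sum_i b i ^+ 2) <= δ * MB by rewrite ler_wpM2l // ltW.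
have h2 : δ * (n%:R^-1 * \sum_i ρ i ^+ 2) <= δ * Mr by rewrite ler_wpM2l // ltW.
have h3 : (n%:R^-1 * \sum_i μ i ^+ 2) / δ <= δ ^+ 2 / δ by rewrite ler_wpM2r // invr_ge0 ltW.
have h4 : (n%:R^-1 * \sum_i e i ^+ 2) / δ <= (s * δ) ^+ 2 / δ by rewrite ler_wpM2r // invr_ge0 ltW.
have e3 : δ ^+ 2 / δ = δ by rewrite expr2 mulfK // gt_eqF.
have e4 : (s * δ) ^+ 2 / δ = δ * s ^+ 2 by field; rewrite gt_eqF.
rewrite e3 in h3; rewrite e4 in h4.
have H : c * (δ * (n%:R^-1 * \sum_i b i ^+ 2) + δ * (n%:R^-1 * \sum_i ρ i ^+ 2)
             + (n%:R^-1 * \sum_i μ i ^+ 2) / δ + (n%:R^-1 * \sum_i e i ^+ 2) / δ)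
   <= c * (δ * MB + δ * Mr + δ + δ * s ^+ 2).
  rewrite ler_wpM2l //; lra.
have -> : δ * (1 + c * (MB + Mr + 1 + s ^+ 2)) = δ + c * (δ * MB + δ * Mr + δ + δ * s ^+ 2) by ring.
lra.
Qed.

End det.

Section asunit.
Variable R : realType.

Lemma posdef_unit n (M : 'M[R]_n) : posdef M -> M \in unitmx.
Proof.
move=> [sym pos]; rewrite unitmxE unitfE; apply/negP => /negPn h.
move: h; rewrite negbK => h; have [v v0 vM] := det0P h.
have := pos v^T; rewrite trmx_eq0 v0 trmxK vM mul0mx mxE ltxx.
by move=> /(_ isT).
Qed.

Lemma mborel_det0 n : mborel [set M : 'M[R]_n | \det M = 0].
Proof.
pose S := g_sigma_algebraType [set U : set 'M[R]_n | open U].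
have hid : mentries (fun M : S => (M : 'M[R]_n)).
  by apply: borel_entries => B hB; rewrite preimage_id.
have := measurable_det hid measurableT (measurable_set1 (0 : R)).
by rewrite setTI.
Qed.

Context {d : measure_display} {T : measurableType d} (P : probability T R).

Lemma as_unit dx dy (Qs : 'cV[R]_dx -> 'M[R]_dy) (X xi : T -> 'cV[R]_dx)
    (Y yi : T -> 'cV[R]_dy) :
  borel_map Qs -> rand_mx X -> rand_mx xi ->
  ae_law P X (fun x => posdef (Qs x)) ->
  same_law P (fun w => col_mx (xi w) (yi w)) (fun w => col_mx (X w) (Y w)) ->
  measurable [set w | Qs (xi w) \notin unitmx] /\ P [set w | Qs (xi w) \notin unitmx] = 0%E.
Proof.
move=> hQs hX hxi hpos hlaw.
have hbad : mborel [set x | \det (Qs x) = 0].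
  exact: (hQs _ (@mborel_det0 dy)).
have E1 : [set w | Qs (xi w) \notin unitmx] = xi @^-1` [set x | \det (Qs x) = 0].
  by apply/seteqP; split => w /=; rewrite unitmxE unitfE negbK => /eqP.
have mB : mborel (usubmx @^-1` [set x | \det (Qs x) = 0] : set 'cV[R]_(dx + dy)).
  exact: borel_cont (@usubmx_cont R dx dy) _ hbad.
rewrite E1; split; first exact: hxi.
have := hlaw _ mB.
rewrite (_ : (fun w => col_mx (xi w) (yi w)) @^-1` _ = xi @^-1` [set x | \det (Qs x) = 0]); last first.
  by apply/seteqP; split => w /=; rewrite col_mxKu.
rewrite (_ : (fun w => col_mx (X w) (Y w)) @^-1` _ = X @^-1` [set x | \det (Qs x) = 0]); last first.
  by apply/seteqP; split => w /=; rewrite col_mxKu.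
move=> ->; apply/negligibleP; first exact: hX.
apply: negligibleS hpos => w /= h hp.
by move: (posdef_unit hp); rewrite unitmxE unitfE h eqxx.
Qed.

End asunit.

Section core.
Variable R : realType.

Lemma frob_op_sq p q (A : 'M[R]_(p, q)) : frob A ^+ 2 <= Num.sqrt q%:R ^+ 2 * opnorm A ^+ 2.
Proof.
rewrite -exprMn ler_pXn2r // ?nnegrE ?frob_ge0 ?frob_opnorm //.
exact: le_trans (frob_ge0 _) (frob_opnorm _).
Qed.

Lemma frob_op_4 p q (A : 'M[R]_(p, q)) : frob A ^+ 4 <= Num.sqrt q%:R ^+ 4 * opnorm A ^+ 4.
Proof.
rewrite -exprMn ler_pXn2r // ?nnegrE ?frob_ge0 ?frob_opnorm //.
exact: le_trans (frob_ge0 _) (frob_opnorm _).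
Qed.

Lemma det_core n dy (fh fsx : 'cV[R]_dy) (Qh Qsx : 'M[R]_dy)
    (Qhi Ci : 'I_n -> 'M[R]_dy) (yi fsi fhi : 'I_n -> 'cV[R]_dy) (δ cB cC cE : R) :
  (0 < n)%N -> 0 < δ -> δ <= 1 ->
  (forall i, Ci i \in unitmx) ->
  vnorm (fsx - fh) <= δ ->
  opnorm (Qsx - Qh) <= δ ->
  n%:R^-1 * \sum_i vnorm (fsi i - fhi i) ^+ 2 <= δ ^+ 2 ->
  n%:R^-1 * \sum_i opnorm (invmx (Qhi i) - invmx (Ci i)) ^+ 2 <= δ ^+ 2 ->
  Num.sqrt (n%:R^-1 * \sum_i opnorm (invmx (Ci i)) ^+ 2) <= cB ->
  (n%:R^-1 * \sum_i opnorm (Ci i) ^+ 4) `^ 4^-1 <= cC ->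
  (n%:R^-1 * \sum_i vnorm (invmx (Ci i) *m (yi i - fsi i)) ^+ 4) `^ 4^-1 <= cE ->
  n%:R^-1 * \sum_i vnorm ((fh + Qh *m (invmx (Qhi i) *m (yi i - fhi i)))
                         - (fsx + Qsx *m (invmx (Ci i) *m (yi i - fsi i))))
  <= δ * (1 + (frob Qsx + Num.sqrt dy%:R) *
          ((Num.sqrt dy%:R * cB) ^+ 2 + ((Num.sqrt dy%:R * cC) ^+ 4 + cE ^+ 4) / 2
           + 1 + Num.sqrt dy%:R ^+ 2)).
Proof.
move=> n0 d0 d1 hC h1 h2 h3 h4 h5 h6 h7.
set s := Num.sqrt dy%:R.
have s0 : 0 <= s by exact: sqrtr_ge0.
have hD : frob (Qh - Qsx) <= s * δ.
  rewrite frobB; apply: le_trans (frob_opnorm _) _; rewrite ler_wpM2l //.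
apply: (@mean_bound _ n _ (fun i => frob (invmx (Ci i))) (fun i => vnorm (yi i - fsi i))
          (fun i => vnorm (fsi i - fhi i)) (fun i => frob (invmx (Qhi i) - invmx (Ci i)))
          (vnorm (fh - fsx))) => //.
- by rewrite addr_ge0 ?frob_ge0.
- by rewrite vnormB.
- by move=> i; apply: pointwise.
- rewrite exprMn; apply: le_trans (_ : _ <= s ^+ 2 * (n%:R^-1 * \sum_i opnorm (invmx (Ci i)) ^+ 2)) _.
    rewrite [in X in _ <= X]mulrCA [in X in _ <= X]mulr_sumr; apply: mean_le => i; exact: frob_op_sq.
  rewrite ler_wpM2l ?sqr_ge0 //; apply: sqrt_le => //.
  by apply: mean_ge0 => i; exact: sqr_ge0.
- set vn := fun i => vnorm (invmx (Ci i) *m (yi i - fsi i)).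
  apply: le_trans (_ : _ <= n%:R^-1 * \sum_i ((frob (Ci i) ^+ 4 + vn i ^+ 4) / 2)) _.
    apply: mean_le => i.
    have e : yi i - fsi i = Ci i *m (invmx (Ci i) *m (yi i - fsi i)).
      by rewrite mulKVmx.
    have hr := vnorm_mul (Ci i) (invmx (Ci i) *m (yi i - fsi i)).
    rewrite -e -/(vn i) in hr.
    have hh : vnorm (yi i - fsi i) ^+ 2 <= (frob (Ci i) * vn i) ^+ 2.
      by rewrite ler_sqr ?nnegrE ?vnorm_ge0 ?mulr_ge0 ?frob_ge0 ?vnorm_ge0.
    have q4 : forall x : R, x ^+ 4 = (x ^+ 2) ^+ 2 by move=> x; rewrite -exprM.
    have := amgm (frob (Ci i) ^+ 2) (vn i ^+ 2).
    rewrite -exprMn !q4 in hh *; lra.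
  have E : n%:R^-1 * \sum_i ((frob (Ci i) ^+ 4 + vn i ^+ 4) / 2) =
     ((n%:R^-1 * \sum_i frob (Ci i) ^+ 4) + (n%:R^-1 * \sum_i vn i ^+ 4)) / 2.
    by rewrite -mulr_suml big_split /=; ring.
  rewrite E.
  have a1 : n%:R^-1 * \sum_i frob (Ci i) ^+ 4 <= (s * cC) ^+ 4.
    apply: le_trans (_ : _ <= s ^+ 4 * (n%:R^-1 * \sum_i opnorm (Ci i) ^+ 4)) _.
      rewrite [in X in _ <= X]mulrCA [in X in _ <= X]mulr_sumr; apply: mean_le => i.
      exact: frob_op_4.
    rewrite exprMn ler_wpM2l ?exprn_ge0 //; apply: pow4_le => //.
    by apply: mean_ge0 => i; exact: exprn_even_ge0.
  have a2 : n%:R^-1 * \sum_i vn i ^+ 4 <= cE ^+ 4.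
    apply: pow4_le => //; by apply: mean_ge0 => i; rewrite exprn_ge0 // vnorm_ge0.
  lra.
- apply: le_trans (_ : _ <= s ^+ 2 * (n%:R^-1 * \sum_i opnorm (invmx (Qhi i) - invmx (Ci i)) ^+ 2)) _.
    rewrite [in X in _ <= X]mulrCA [in X in _ <= X]mulr_sumr; apply: mean_le => i; exact: frob_op_sq.
  by rewrite exprMn ler_wpM2l ?sqr_ge0.
Qed.

End core.

Section prob.
Variable R : realType.
Context {d : measure_display} {T : measurableType d} (P : probability T R).

Lemma pU2 (A B : set T) (a b : R) : measurable A -> measurable B ->
  (P A <= a%:E)%E -> (P B <= b%:E)%E -> (P (A `|` B) <= (a + b)%:E)%E.
Proof.
move=> mA mB hA hB; apply: le_trans (measureU2 _ mA mB) _.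
by rewrite EFinD; apply: leeD.
Qed.

Lemma prob_cover7 (E G1 G2 G3 G4 G5 G6 G7 N : set T) (a1 a2 a3 a4 a5 a6 a7 : R) :
  measurable E -> measurable G1 -> measurable G2 -> measurable G3 ->
  measurable G4 -> measurable G5 -> measurable G6 -> measurable G7 ->
  P.-negligible N ->
  E `<=` G1 `|` G2 `|` G3 `|` G4 `|` G5 `|` G6 `|` G7 `|` N ->
  (P G1 <= a1%:E)%E -> (P G2 <= a2%:E)%E -> (P G3 <= a3%:E)%E ->
  (P G4 <= a4%:E)%E -> (P G5 <= a5%:E)%E -> (P G6 <= a6%:E)%E ->
  (P G7 <= a7%:E)%E ->
  (P E <= (a1 + a2 + a3 + a4 + a5 + a6 + a7)%:E)%E.
Proof.
move=> mE m1 m2 m3 m4 m5 m6 m7 [Nm [mNm PN0 NNm]] hE h1 h2 h3 h4 h5 h6 h7.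
have mU : measurable (G1 `|` G2 `|` G3 `|` G4 `|` G5 `|` G6 `|` G7).
  by repeat apply: measurableU.
have hU : (P (G1 `|` G2 `|` G3 `|` G4 `|` G5 `|` G6 `|` G7) <=
            (a1 + a2 + a3 + a4 + a5 + a6 + a7)%:E)%E.
  apply: pU2 => //; first by repeat apply: measurableU.
  apply: pU2 => //; first by repeat apply: measurableU.
  apply: pU2 => //; first by repeat apply: measurableU.
  apply: pU2 => //; first by repeat apply: measurableU.
  apply: pU2 => //; first by repeat apply: measurableU.
  exact: pU2.
apply: (@le_trans _ _ (P (G1 `|` G2 `|` G3 `|` G4 `|` G5 `|` G6 `|` G7 `|` Nm))).
  apply: le_measure; rewrite ?inE //; first exact: measurableU.
  by move=> w /hE [h|h]; [left|right; exact: NNm].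
have := pU2 mU mNm hU (_ : (P Nm <= 0%:E)%E); rewrite addr0; apply.
by rewrite PN0.
Qed.

Lemma exp_bound (n : nat) (K b : 'I_7 -> R) (bt : R) :
  (forall k, 0 <= K k) -> (forall k, bt <= b k) ->
  \sum_k (K k * expR (- (n%:R * b k))) <= (\sum_k K k) * expR (- (n%:R * bt)).
Proof.
move=> hK hb; rewrite mulr_suml; apply: ler_sum => k _.
rewrite ler_wpM2l // ler_expR lerN2 ler_wpM2l //.
Qed.

End prob.

Unset Implicit Arguments.

Lemma notlt (R : realType) (a b : R) : ~ (a < b) -> b <= a.
Proof. by move=> h; rewrite leNgt; apply/negP. Qed.
Arguments notlt {R a b}.

Lemma measurable_powR_fun (R : realType) (d : measure_display) (S : measurableType d)
  (f : S -> R) (p : R) :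
  measurable_fun setT f -> measurable_fun setT (fun w => f w `^ p).
Proof. by move=> mf; exact: (measurableT_comp (measurable_powR p) mf). Qed.

Lemma expb (R : realType) (n : nat) (K b bt : R) : 0 <= K -> bt <= b ->
  K * expR (- (n%:R * b)) <= K * expR (- (n%:R * bt)).
Proof. by move=> K0 hb; rewrite ler_wpM2l // ler_expR lerN2 ler_wpM2l. Qed.

Theorem theorem6 (R : realType) (d : measure_display) (T : measurableType d)
  (P : probability T R) (dx dy : nat)
  (fs : 'cV[R]_dx -> 'cV[R]_dy) (Qs : 'cV[R]_dx -> 'M[R]_dy)
  (X : T -> 'cV[R]_dx) (eps : T -> 'cV[R]_dy)
  (xs : nat -> T -> 'cV[R]_dx) (ys : nat -> T -> 'cV[R]_dy)
  (fhat : nat -> T -> 'cV[R]_dx -> 'cV[R]_dy)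
  (Qhat : nat -> T -> 'cV[R]_dx -> 'M[R]_dy) :
  (* ---- the model  Y = f*(X) + Q*(X) eps ---- *)
  borel_map fs -> borel_map Qs ->
  rand_mx X -> rand_mx eps -> indep2 P X eps ->
  (forall j : 'I_dy, ('E_P[fun w => eps w j ord0] = 0)%E) ->
  ae_law P X (fun x => posdef (Qs x)) ->
  (* ---- the data (x^i, y^i), i = 0, 1, 2, ...: i.i.d. copies of (X, Y) ---- *)
  (forall i, rand_mx (xs i)) -> (forall i, rand_mx (ys i)) ->
  mutual_indep P (fun i w => col_mx (xs i w) (ys i w)) ->
  (forall i, same_law P (fun w => col_mx (xs i w) (ys i w))
                        (fun w => col_mx (X w) (fs (X w) + Qs (X w) *m eps w))) ->
  (* ---- the estimates hat f_n, hat Q_n are computed from D_n ---- *)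
  (forall n w w', (0 < n)%N ->
     (forall i, (i < n)%N -> xs i w = xs i w' /\ ys i w = ys i w') ->
     fhat n w = fhat n w' /\ Qhat n w = Qhat n w') ->
  (forall n x, (0 < n)%N -> rand_mx (fun w => fhat n w x)) ->
  (forall n x, (0 < n)%N -> rand_mx (fun w => Qhat n w x)) ->
  (forall n i, (0 < n)%N -> rand_mx (fun w => fhat n w (xs i w))) ->
  (forall n i, (0 < n)%N -> rand_mx (fun w => Qhat n w (xs i w))) ->
  (forall n, (0 < n)%N ->
     ae_law P X (fun x => P.-negligible [set w | (~ posdef (Qhat n w x))%R])) ->
  (* ---- finiteness of the expectations appearing below ---- *)
  P.-integrable setT (fun w => (opnorm (invmx (Qs (X w))) ^+ 2)%:E) ->
  P.-integrable setT (fun w => (opnorm (Qs (X w)) ^+ 4)%:E) ->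
  P.-integrable setT (fun w => (vnorm (eps w))%:E) ->
  P.-integrable setT (fun w => (vnorm (eps w) ^+ 4)%:E) ->
  (* ---- assumption (i) ---- *)
  (forall kappa : R, 0 < kappa ->
   exists (Kf bf KQ bQ : 'cV[R]_dx -> R) (Kfb bfb KQb bQb : R),
     (forall x, 0 < Kf x /\ 0 < bf x /\ 0 < KQ x /\ 0 < bQ x) /\
     0 < Kfb /\ 0 < bfb /\ 0 < KQb /\ 0 < bQb /\
     forall n : nat, (0 < n)%N ->
       ae_law P X (fun x =>
         (P [set w | (kappa < vnorm (fs x - fhat n w x))%R]
            <= ((Kf x * expR (- (n%:R * bf x)))%R)%:E)%E) /\
       ae_law P X (fun x =>
         (P [set w | (kappa < opnorm (Qs x - Qhat n w x))%R]
            <= ((KQ x * expR (- (n%:R * bQ x)))%R)%:E)%E) /\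
       (P [set w | (kappa ^+ 2 < n%:R^-1 *
            \sum_(i < n) vnorm (fs (xs i w) - fhat n w (xs i w)) ^+ 2)%R]
          <= ((Kfb * expR (- (n%:R * bfb)))%R)%:E)%E /\
       (P [set w | (kappa ^+ 2 < n%:R^-1 *
            \sum_(i < n) opnorm (invmx (Qhat n w (xs i w))
                                 - invmx (Qs (xs i w))) ^+ 2)%R]
          <= ((KQb * expR (- (n%:R * bQb)))%R)%:E)%E) ->
  (* ---- assumption (ii) ---- *)
  (forall kappa : R, 0 < kappa ->
   exists gQ gQb : R, 0 < gQ /\ 0 < gQb /\
     forall n : nat, (0 < n)%N ->
       (P [set w | (Num.sqrt (fine 'E_P[fun w => opnorm (invmx (Qs (X w))) ^+ 2])
                     + kappa
                   < Num.sqrt (n%:R^-1 *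
                       \sum_(i < n) opnorm (invmx (Qs (xs i w))) ^+ 2))%R]
          <= (expR (- (n%:R * gQ)))%:E)%E /\
       (P [set w | ((fine 'E_P[fun w => opnorm (Qs (X w)) ^+ 4]) `^ (4^-1)
                     + kappa
                   < (n%:R^-1 * \sum_(i < n) opnorm (Qs (xs i w)) ^+ 4) `^ (4^-1))%R]
          <= (expR (- (n%:R * gQb)))%:E)%E) ->
  (* ---- assumption (iii) ---- *)
  (forall kappa : R, 0 < kappa ->
   exists ge geb : R, 0 < ge /\ 0 < geb /\
     forall n : nat, (0 < n)%N ->
       (P [set w | (fine 'E_P[fun w => vnorm (eps w)] + kappa
                   < n%:R^-1 * \sum_(i < n) vnorm (eps_data fs Qs xs ys i w))%R]
          <= (expR (- (n%:R * ge)))%:E)%E /\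
       (P [set w | ((fine 'E_P[fun w => vnorm (eps w) ^+ 4]) `^ (4^-1) + kappa
                   < (n%:R^-1 * \sum_(i < n)
                        vnorm (eps_data fs Qs xs ys i w) ^+ 4) `^ (4^-1))%R]
          <= (expR (- (n%:R * geb)))%:E)%E) ->
  (* ---- conclusion ---- *)
  forall kappa : R, 0 < kappa ->
  ae_law P X (fun x =>
    exists Kt bt : R, 0 < Kt /\ 0 < bt /\
      forall n : nat, (0 < n)%N ->
        (P [set w | (kappa < n%:R^-1 *
              \sum_(i < n) vnorm (eps_tilde fs Qs xs ys fhat Qhat n i w x))%R]
           <= ((Kt * expR (- (n%:R * bt)))%R)%:E)%E).
Proof.
move=> hfs hQs hX heps hind hE0 hpos hxs hys hiid hlaw hdep hfhx hQhx hfhi hQhi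
  hQhpos hi1 hi2 hi3 hi4 hyp1 hyp2 hyp3 kappa kpos.
pose dl (m : nat) : R := (m.+1%:R)^-1.
have dl0 : forall m, 0 < dl m by move=> m; rewrite /dl invr_gt0 ltr0n.
pose good m x := exists Kf bf KQ bQ : R, [/\ 0 < Kf, 0 < bf, 0 < KQ, 0 < bQ &
  forall n, (0 < n)%N ->
   (P [set w | (dl m < vnorm (fs x - fhat n w x))%R] <= ((Kf * expR (- (n%:R * bf)))%R)%:E)%E /\
   (P [set w | (dl m < opnorm (Qs x - Qhat n w x))%R] <= ((KQ * expR (- (n%:R * bQ)))%R)%:E)%E].
have hgood : forall m, P.-negligible (X @^-1` [set x | ~ good m x]).
  move=> m.
  have [Kf [bf [KQ [bQ [Kfb [bfb [KQb [bQb [hp [_ [_ [_ [_ hn]]]]]]]]]]]]] := hyp1 (dl m) (dl0 m).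
  pose A n := X @^-1` [set x | ~ (P [set w | (dl m < vnorm (fs x - fhat n.+1 w x))%R]
                   <= ((Kf x * expR (- (n.+1%:R * bf x)))%R)%:E)%E].
  pose B n := X @^-1` [set x | ~ (P [set w | (dl m < opnorm (Qs x - Qhat n.+1 w x))%R]
                   <= ((KQ x * expR (- (n.+1%:R * bQ x)))%R)%:E)%E].
  apply: (@negligibleS _ _ _ P (\bigcup_n (A n `|` B n))).
    move=> w /= ngood; apply: contrapT => hnot; apply: ngood.
    have [h1 [h2 [h3 h4]]] := hp (X w).
    exists (Kf (X w)), (bf (X w)), (KQ (X w)), (bQ (X w)); split => // -[//|n] _.
    split; apply: contrapT => hc; apply: hnot; exists n => //; [left|right]; exact: hc.
  apply: negligible_bigcup => n; apply: negligibleU.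
    exact: (hn n.+1 isT).1.
  exact: (hn n.+1 isT).2.1.
suff main : forall x, (forall m, good m x) ->
   exists Kt bt : R, 0 < Kt /\ 0 < bt /\
      forall n : nat, (0 < n)%N ->
        (P [set w | (kappa < n%:R^-1 *
              \sum_(i < n) vnorm (eps_tilde fs Qs xs ys fhat Qhat n i w x))%R]
           <= ((Kt * expR (- (n%:R * bt)))%R)%:E)%E.
  rewrite /ae_law; apply: (@negligibleS _ _ _ P (\bigcup_m X @^-1` [set x | ~ good m x])).
    move=> w /= hnot; apply: contrapT => hall; apply: hnot; apply: main => m.
    by apply: contrapT => hg; apply: hall; exists m.
  exact: negligible_bigcup.
move=> x hgx.
pose s : R := Num.sqrt dy%:R.
have s0 : 0 <= s by exact: sqrtr_ge0.
have [gQ [gQb [gQ0 [gQb0 h2]]]] := hyp2 1 ltr01.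
have [ge [geb [ge0 [geb0 h3]]]] := hyp3 1 ltr01.
pose cB := Num.sqrt (fine 'E_P[fun w => opnorm (invmx (Qs (X w))) ^+ 2]) + 1.
pose cC := (fine 'E_P[fun w => opnorm (Qs (X w)) ^+ 4]) `^ 4^-1 + 1.
pose cE := (fine 'E_P[fun w => vnorm (eps w) ^+ 4]) `^ 4^-1 + 1.
pose L := 1 + (frob (Qs x) + s) * ((s * cB) ^+ 2 + ((s * cC) ^+ 4 + cE ^+ 4) / 2 + 1 + s ^+ 2).
have L0 : 0 <= L.
  rewrite /L; apply: addr_ge0 => //; apply: mulr_ge0; first by rewrite addr_ge0 ?frob_ge0.
  by rewrite !addr_ge0 ?sqr_ge0 ?divr_ge0 ?addr_ge0 ?exprn_even_ge0.
pose m := Num.bound (L / kappa).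
have hm : dl m * L <= kappa.
  have hb : L / kappa < m%:R by apply: archi_boundP; rewrite divr_ge0 // ltW.
  have hb' : L <= m.+1%:R * kappa.
    have : L < m%:R * kappa by rewrite -ltr_pdivrMr.
    by rewrite -natr1 mulrDl mul1r => h; apply: ltW; apply: (lt_le_trans h); rewrite lerDl ltW.
  apply: le_trans (_ : dl m * (m.+1%:R * kappa) <= _).
    by rewrite ler_wpM2l // ltW.
  by rewrite /dl mulrA mulVf ?mul1r // pnatr_eq0.
have [Kf [bf [KQ [bQ [Kf0 bf0 KQ0 bQ0 hx]]]]] := hgx m.
have [Kf1 [bf1 [KQ1 [bQ1 [Kfb [bfb [KQb [bQb [_ [Kfb0 [bfb0 [KQb0 [bQb0 hn]]]]]]]]]]]]] :=
  hyp1 (dl m) (dl0 m).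
pose bt := Num.min bf (Num.min bQ (Num.min bfb (Num.min bQb (Num.min gQ (Num.min gQb geb))))).
exists (Kf + KQ + Kfb + KQb + 1 + 1 + 1), bt; split.
  by rewrite !addr_gt0.
split; first by rewrite /bt !lt_min bf0 bQ0 bfb0 bQb0 gQ0 gQb0 geb0.
move=> n npos.
have [_ [_ [h3E h4E]]] := hn n npos.
have [h5 h6] := h2 n npos.
have [_ h7] := h3 n npos.
have [h1 h1'] := hx n npos.
have mFx : mentries (fun w => fhat n w x) := borel_entries (hfhx n x npos).
have mQx : mentries (fun w => Qhat n w x) := borel_entries (hQhx n x npos).
have mFi : forall i, mentries (fun w => fhat n w (xs i w)) :=
  fun i => borel_entries (hfhi n i npos).
have mQi : forall i, mentries (fun w => Qhat n w (xs i w)) :=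
  fun i => borel_entries (hQhi n i npos).
have mYi : forall i, mentries (ys i) := fun i => borel_entries (hys i).
have mFSi : forall i, mentries (fun w => fs (xs i w)).
  by move=> i; apply: borel_entries => B hB; exact: (hxs i _ (hfs B hB)).
have mQSi : forall i, mentries (fun w => Qs (xs i w)).
  by move=> i; apply: borel_entries => B hB; exact: (hxs i _ (hQs B hB)).
have mED : forall i, mentries (eps_data fs Qs xs ys i).
  by move=> i; apply: mentriesM; [exact: mentries_invmx|exact: mentriesB].
have mE : measurable [set w | (kappa < n%:R^-1 *
              \sum_(i < n) vnorm (eps_tilde fs Qs xs ys fhat Qhat n i w x))%R].
  apply: measurable_lt_set; apply: measurable_funM; first exact: measurable_cst.
  apply: measurable_sum => i; apply: measurable_vnorm.
  apply: mentriesB.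
    apply: mentriesD => //; apply: mentriesM => //; apply: mentriesM.
      exact: mentries_invmx.
    exact: mentriesB.
  apply: mentriesD; first exact: mentries_cst.
  apply: mentriesM; first exact: mentries_cst.
  exact: mED.
have hN : P.-negligible (\bigcup_i [set w | Qs (xs i w) \notin unitmx]).
  apply: negligible_bigcup => i.
  have [mi Pi] := as_unit hQs hX (hxs i) hpos (hlaw i).
  by apply/negligibleP.
apply: le_trans; first apply: (prob_cover7 mE _ _ _ _ _ _ _ hN _ h1 h1' h3E h4E h5 h6 h7).
- apply: measurable_lt_set; apply: measurable_vnorm.
  by apply: mentriesB => //; exact: mentries_cst.
- apply: measurable_lt_set; apply: measurable_opnorm; apply: entries_borel.
  by apply: mentriesB => //; exact: mentries_cst.
- apply: measurable_lt_set; apply: measurable_funM; first exact: measurable_cst.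
  apply: measurable_sum => i; apply: measurable_funX; apply: measurable_vnorm.
  exact: mentriesB.
- apply: measurable_lt_set; apply: measurable_funM; first exact: measurable_cst.
  apply: measurable_sum => i; apply: measurable_funX; apply: measurable_opnorm.
  by apply: entries_borel; apply: mentriesB; exact: mentries_invmx.
- apply: measurable_lt_set; apply: measurable_sqrt_fun.
  apply: measurable_funM; first exact: measurable_cst.
  apply: measurable_sum => i; apply: measurable_funX; apply: measurable_opnorm.
  by apply: entries_borel; exact: mentries_invmx.
- apply: measurable_lt_set; apply: measurable_powR_fun.
  apply: measurable_funM; first exact: measurable_cst.
  apply: measurable_sum => i; apply: measurable_funX; apply: measurable_opnorm.
  exact: (fun B hB => hxs i _ (hQs B hB)).
- apply: measurable_lt_set; apply: measurable_powR_fun.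
  apply: measurable_funM; first exact: measurable_cst.
  apply: measurable_sum => i; apply: measurable_funX; exact: measurable_vnorm.
- move=> w hw; apply: contrapT => hno.
  move: hno => /not_orP [/not_orP [/not_orP [/not_orP [/not_orP [/not_orP [/not_orP [n1 n2] n3] n4] n5] n6] n7] n8].
  have hu : forall i : 'I_n, Qs (xs i w) \in unitmx.
    move=> i; apply: contrapT => hi; apply: n8; exists i => //; exact/negP.
  have H := @det_core R n dy (fhat n w x) (fs x) (Qhat n w x) (Qs x)
    (fun i : 'I_n => Qhat n w (xs i w)) (fun i : 'I_n => Qs (xs i w))
    (fun i : 'I_n => ys i w) (fun i : 'I_n => fs (xs i w)) (fun i : 'I_n => fhat n w (xs i w))
    (dl m) cB cC cE npos (dl0 m) _ hu (notlt n1) (notlt n2) (notlt n3) (notlt n4)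
    (notlt n5) (notlt n6) (notlt n7).
  have := lt_le_trans hw (le_trans (H _) hm).
  have dl1 : dl m <= 1 by rewrite /dl invf_le1 ?ltr0n // ler1n.
  have := lt_le_trans hw (le_trans (H dl1) hm).
  by rewrite ltxx.
- rewrite lee_fin.
  have b1 : bt <= bf by rewrite /bt !ge_min lexx.
  have b2 : bt <= bQ by rewrite /bt !ge_min lexx !orbT.
  have b3 : bt <= bfb by rewrite /bt !ge_min lexx !orbT.
  have b4 : bt <= bQb by rewrite /bt !ge_min lexx !orbT.
  have b5 : bt <= gQ by rewrite /bt !ge_min lexx !orbT.
  have b6 : bt <= gQb by rewrite /bt !ge_min lexx !orbT.
  have b7 : bt <= geb by rewrite /bt !ge_min lexx !orbT.
  have e1 := @expb R n _ _ _ (ltW Kf0) b1.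
  have e2 := @expb R n _ _ _ (ltW KQ0) b2.
  have e3 := @expb R n _ _ _ (ltW Kfb0) b3.
  have e4 := @expb R n _ _ _ (ltW KQb0) b4.
  have e5 := @expb R n _ _ _ ler01 b5.
  have e6 := @expb R n _ _ _ ler01 b6.
  have e7 := @expb R n _ _ _ ler01 b7.
  rewrite !mul1r in e5 e6 e7.
  lra.
Qed.
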